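(* For $n\in\mathbb{N}$, $z(n)=f(n)+n$ if and only if $n=0$ or $n=\lfloor k\varphi^2\rfloor+1$ for some integer $k\ge1$, where $\varphi=(1+\sqrt5)/2$.
   Context: $\mathbb{N}=\{0,1,2,\dots\}$. The sequence $f:\mathbb{N}\to\mathbb{N}$ is defined greedily: $f(0)=0$, and for $n\ge1$, $f(n)$ is the least natural number such that (i) $f(n)\notin\{f(0),f(1),\dots,f(n-1)\}$ and (ii) $\sum_{1\le i\le n} f(i)$ is divisible by $n$. The sequence $z:\mathbb{N}\to\mathbb{N}$ is defined greedily: $z(0)=0$, and for $n\ge1$, $z(n)$ is the least natural number such that (i) $z(n)\notin\{z(0),\dots,z(n-1)\}$ and (ii) $\sum_{2\le i\le n} z(i)$ is divisible by $n+1$ (the empty sum being $0$). *)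

(* Defs.v *)
From mathcomp Require Import all_boot.
From Stdlib Require Import Reals.

Set Implicit Arguments.
Unset Strict Implicit.
Unset Printing Implicit Defensive.

(* Least natural number m < bound satisfying P; returns bound if there is none.
   Since iota 0 bound lists 0,1,...,bound-1, the index found is the value. *)
Definition least_below (bound : nat) (P : pred nat) : nat :=
  find P (iota 0 bound).

(* Given s = [:: f 0; ...; f (n-1)], the greedy choice of f n (n >= 1):
   least m not among s with n | f 1 + ... + f (n-1) + m.
   The least such m is < n*n + n + 1: among the n+1 numbers r, r+n, ..., r+n*n
   (r the required residue mod n, r < n) at least one is not in s (size n). *)
Definition next_f (n : nat) (s : seq nat) : nat :=
  least_below (n * n + n + 1)
    (fun m => (m \notin s) && (n %| sumn (behead s) + m)).

Fixpoint fseq (n : nat) : seq nat :=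
  match n with
  | 0 => [:: 0]
  | n'.+1 => let s := fseq n' in rcons s (next_f n'.+1 s)
  end.

Definition f (n : nat) : nat := nth 0 (fseq n) n.

(* Given s = [:: z 0; ...; z (n-1)], the greedy choice of z n (n >= 1):
   least m not among s with (n+1) | z 2 + ... + z n (empty sum 0 when n = 1),
   where z n = m.  The least such m is < (n+1)*(n+1)+1: among the n+1 numbers
   r, r+(n+1), ..., r+n(n+1) (r < n+1) one is not in s. *)
Definition next_z (n : nat) (s : seq nat) : nat :=
  least_below ((n + 1) * (n + 1) + 1)
    (fun m => (m \notin s) &&
              (n.+1 %| (if 2 <= n then sumn (drop 2 s) + m else 0))).

Fixpoint zseq (n : nat) : seq nat :=
  match n with
  | 0 => [:: 0]
  | n'.+1 => let s := zseq n' in rcons s (next_z n'.+1 s)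
  end.

Definition z (n : nat) : nat := nth 0 (zseq n) n.

Definition phi : R := ((1 + sqrt 5) / 2)%R.

(* Main.v *)
Require Import Defs.
From mathcomp Require Import all_boot zify.
From Stdlib Require Import Reals ZArith Lra Lia Psatz.
From Stdlib Require Import ClassicalEpsilon.

Local Open Scope R_scope.

Lemma phi_sq : phi * phi = phi + 1.
Proof.
unfold phi. have h := sqrt_sqrt 5.
have h5 : 0 <= 5 by lra. specialize (h h5). nra.
Qed.

Lemma phi_gt1 : 1 < phi.
Proof.
unfold phi. have : 1 < sqrt 5.
  rewrite -sqrt_1. apply sqrt_lt_1; lra.
lra.
Qed.

Lemma phi_lt2 : phi < 2.
Proof.
unfold phi. have : sqrt 5 < 3.
  have h9 : sqrt 9 = 3. { replace 9 with (3*3) by lra. apply sqrt_square. lra. }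
  rewrite -h9. apply sqrt_lt_1; lra.
lra.
Qed.

Lemma phi_inv (x : R) : x * phi * (phi - 1) = x.
Proof. replace (x * phi * (phi - 1)) with (x * (phi * phi - phi)) by ring.
rewrite phi_sq. ring. Qed.

Lemma quad (x k : R) : x*x - x*k - k*k = (x - k*phi)*(x + k*(phi-1)).
Proof. replace ((x - k*phi)*(x + k*(phi-1))) with (x*x - x*k - k*k*(phi*phi - phi)) by ring.
rewrite phi_sq. ring. Qed.

Lemma quad_lt (x k : R) : 0 <= x -> 0 <= k -> x*x < x*k + k*k -> x < k*phi.
Proof.
move=> hx hk h. destruct (Rlt_or_le x (k*phi)) as [?|h2]; first done.
have h3 : 0 <= (x - k*phi)*(x + k*(phi-1)).
  apply Rmult_le_pos; first lra.
  have := phi_gt1. nra.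
rewrite -quad in h3. lra.
Qed.

Lemma quad_gt (x k : R) : 0 <= x -> 0 <= k -> x*x > x*k + k*k -> x > k*phi.
Proof.
move=> hx hk h. destruct (Rlt_or_le (k*phi) x) as [?|h2]; first done.
have h3 : 0 <= (k*phi - x)*(x + k*(phi-1)).
  apply Rmult_le_pos; first lra.
  have := phi_gt1. nra.
have : (x - k*phi)*(x + k*(phi-1)) <= 0 by nra.
rewrite -quad. lra.
Qed.

Local Close Scope R_scope.

Lemma descent n k : n * n = n * k + k * k -> k = 0.
Proof.
elim/ltn_ind: n k => n IH k h.
case: (posnP k) => [//|hk].
have hkn : k < n by nia.
have [d hd] : exists d, n = k + d by exists (n - k); lia.
subst n.
have hd0 : d = 0 := IH k hkn d ltac:(nia).
subst d. nia.
Qed.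

Local Open Scope R_scope.

Lemma irr n k : (0 < k)%nat -> INR k * phi <> INR n.
Proof.
move=> hk h.
have h1 : INR n * INR n - INR n * INR k - INR k * INR k = 0.
  rewrite quad h. ring.
have h2 : INR (n * n) = INR (n * k + k * k).
  rewrite !mult_INR plus_INR !mult_INR. lra.
have := INR_eq _ _ h2. move/descent. lia.
Qed.

Definition A (k : nat) : nat := Z.to_nat (Int_part (INR k * phi)).

Lemma Int_part_uniq (r : R) (n : nat) : INR n <= r < INR n + 1 -> Int_part r = Z.of_nat n.
Proof.
move=> [h1 h2]. rewrite /Int_part.
have -> : up r = (Z.of_nat n + 1)%Z.
  symmetry; apply tech_up; rewrite plus_IZR -INR_IZR_INZ; lra.
lia.
Qed.

Lemma A_spec k : INR (A k) <= INR k * phi < INR (A k) + 1.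
Proof.
have [h1 h2] := base_Int_part (INR k * phi).
have hp : 0 <= INR k * phi by have := pos_INR k; have := phi_gt1; nra.
have hz : (0 <= Int_part (INR k * phi))%Z.
  have : (-1 < Int_part (INR k * phi))%Z by apply lt_IZR; simpl; lra.
  lia.
have e : INR (A k) = IZR (Int_part (INR k * phi)).
  by rewrite /A INR_IZR_INZ Z2Nat.id.
rewrite e. lra.
Qed.

Lemma A_lt k : (0 < k)%nat -> INR (A k) < INR k * phi.
Proof.
move=> hk. have [h1 _] := A_spec k.
have := @irr (A k) k hk. lra.
Qed.

Lemma A_uniq k n : INR n <= INR k * phi < INR n + 1 -> A k = n.
Proof.
move=> h. rewrite /A (@Int_part_uniq _ n h). by rewrite Nat2Z.id.
Qed.

Lemma INR_ltS {a b : nat} : (a < b)%nat -> INR a + 1 <= INR b.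
Proof. move=> h. rewrite -S_INR. apply le_INR. apply/leP. exact h. Qed.

Lemma INR_le' {a b : nat} : (a <= b)%nat -> INR a <= INR b.
Proof. move=> h. apply le_INR. apply/leP. exact h. Qed.

Lemma INR_lt' {a b : nat} : INR a < INR b -> (a < b)%nat.
Proof. move=> h. apply/ltP. by apply INR_lt. Qed.

Lemma A0 : A 0 = 0%nat.
Proof. apply A_uniq. simpl. lra. Qed.

Lemma A_incr k : (A k < A k.+1)%nat.
Proof.
apply INR_lt'. have [h1 h2] := A_spec k. have [h3 h4] := A_spec k.+1.
rewrite S_INR in h4. have := phi_gt1. lra.
Qed.

Lemma A_step2 k : (A k.+1 <= (A k).+2)%nat.
Proof.
have : INR (A k.+1) < INR (A k).+3.
  have [h1 h2] := A_spec k. have [h3 h4] := A_spec k.+1.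
  rewrite S_INR in h3. rewrite !S_INR. have := phi_lt2. lra.
move/INR_lt'. lia.
Qed.

Lemma A_ge k : (k <= A k)%nat.
Proof.
have : INR k < INR (A k) + 1.
  have [h1 h2] := A_spec k. have := phi_gt1. have := pos_INR k. nra.
rewrite -S_INR. move/INR_lt'. lia.
Qed.

Lemma A_lt2 k : (0 < k)%nat -> (A k < 2 * k)%nat.
Proof.
move=> hk. apply INR_lt'. have := A_lt k hk. rewrite mult_INR.
have := phi_lt2. have : 0 < INR k by apply lt_0_INR; apply/ltP. simpl. nra.
Qed.

Lemma CNT {i m} : (A i < m)%nat -> (m <= A i.+1)%nat -> A m = (m + i)%nat.
Proof.
move=> h1 h2. apply A_uniq.
have [a1 a2] := A_spec i.
have b1 := INR_ltS h1.
have b2 := INR_le' h2.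
have b3 := @A_lt i.+1 isT.
rewrite S_INR in b3.
have c1 : INR i * phi * (phi - 1) < INR m * (phi - 1).
  apply Rmult_lt_compat_r; have := phi_gt1; lra.
have c2 : INR m * (phi - 1) < (INR i + 1) * phi * (phi - 1).
  apply Rmult_lt_compat_r; have := phi_gt1; lra.
rewrite !phi_inv in c1 c2.
rewrite plus_INR. lra.
Qed.

Local Close Scope R_scope.

Definition InA (n : nat) : Prop := exists k, 0 < k /\ A k = n.

Lemma A_mono {i j} : i < j -> A i < A j.
Proof.
elim: j => [//|j IH]. rewrite ltnS leq_eqVlt => /orP [/eqP ->|h].
  exact: A_incr.
apply: ltn_trans (IH h) (A_incr j).
Qed.

Lemma A_le {i j} : i <= j -> A i <= A j.
Proof. rewrite leq_eqVlt => /orP [/eqP ->//|h]. exact: ltnW (A_mono h). Qed.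

Lemma A_monoE i j : (A i < A j) = (i < j).
Proof.
case: (ltnP i j) => h; first exact: A_mono.
apply/negbTE. rewrite -leqNgt. exact: A_le.
Qed.

Lemma A_inj i j : A i = A j -> i = j.
Proof.
move=> h. case: (ltngtP i j) => // hij.
  have := A_mono hij. lia.
have := A_mono hij. lia.
Qed.

Lemma A_pos {k} : 0 < k -> 0 < A k.
Proof. move=> hk. have := A_ge k. lia. Qed.

Lemma bracket {m} : 0 < m -> exists i, A i < m <= A i.+1.
Proof.
move=> hm.
have ex : exists i, m <= A i by exists m; exact: A_ge.
case: (ex_minnP ex) => i0 hi0 hmin.
have hi0p : 0 < i0.
  case: i0 hi0 hmin => [|//]. rewrite A0. lia.
exists i0.-1. rewrite prednK //. apply/andP; split=> //.
rewrite ltnNge. apply/negP => h. have := hmin _ h. lia.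
Qed.

Lemma gap_cases {n} : 0 < n ->
  (InA n /\ A n.+1 = (A n).+2) \/ (~ InA n /\ A n.+1 = (A n).+1).
Proof.
move=> hn. case: (bracket hn) => i /andP [h1 h2].
have hAn := CNT h1 h2.
case: (ltngtP n (A i.+1)) => h3.
- right. split.
  + move=> [k [hk hAk]]. subst n.
    rewrite A_monoE in h1. rewrite A_monoE in h3. lia.
  + have := @CNT i n.+1 (ltn_trans h1 (ltnSn n)) h3. lia.
- lia.
- left. split; first by exists i.+1.
  have h4 : A i.+1 < n.+1 by lia.
  have h5 : n.+1 <= A i.+2 by have := A_incr i.+1; lia.
  have := CNT h4 h5. lia.
Qed.

Lemma gapA {k} : 0 < k -> A (A k).+1 = (A (A k)).+2.
Proof.
move=> hk. case: (gap_cases (A_pos hk)) => [[_ //]|[h _]].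
exfalso. apply h. by exists k.
Qed.

Lemma gapN {n} : 0 < n -> ~ InA n -> A n.+1 = (A n).+1.
Proof. move=> hn hi. case: (gap_cases hn) => [[h _]|[_ //]]. by []. Qed.

Lemma AA {k} : 0 < k -> A (A k) = A k + k - 1.
Proof.
move=> hk. have h1 : A k.-1 < A k by apply A_mono; lia.
have h2 : A k <= A k.-1.+1 by rewrite prednK.
have := CNT h1 h2. lia.
Qed.

Lemma AB {k} : 0 < k -> A (A k + k) = 2 * A k + k.
Proof.
move=> hk. have e := AA hk. have g := gapA hk.
have h1 : A (A k) < A k + k by lia.
have h2 : A k + k <= A (A k).+1 by lia.
have := CNT h1 h2. lia.
Qed.

Lemma AS1 {k} : 0 < k -> A (A k).+1 = A k + k + 1.
Proof. move=> hk. have := AA hk. have := gapA hk. lia. Qed.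

Lemma notA_B {k} : 0 < k -> ~ InA (A k + k).
Proof.
move=> hk [l [hl e]].
have e1 := AA hk. have e2 := AS1 hk.
have a1 : A (A k) < A l by lia.
have a2 : A l < A (A k).+1 by lia.
rewrite A_monoE in a1. rewrite A_monoE in a2. lia.
Qed.

Lemma B_of_notA {n} : 0 < n -> ~ InA n -> exists k, 0 < k /\ n = A k + k.
Proof.
move=> hn hna. case: (bracket hn) => i /andP [h1 h2].
case: (ltngtP n (A i.+1)) => h3; last first.
  exfalso; apply hna; by exists i.+1.
  lia.
have hi : 0 < i.
  case: i h1 h2 h3 => [|//]. rewrite A0. have : A 1 = 1.
    apply A_uniq. have := phi_gt1; have := phi_lt2. simpl. lra.
  lia.
case: (gap_cases hi) => [[[k [hk e]] _]|[_ g]]; last by lia.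
exists k; split=> //. subst i. have := AA hk. have := gapA hk. lia.
Qed.

Lemma B_succA {n} : 0 < n -> ~ InA n -> InA n.+1.
Proof.
move=> hn hna. case: (B_of_notA hn hna) => k [hk ->].
exists (A k).+1. split=> //. rewrite AS1 //. lia.
Qed.

Lemma A1 : A 1 = 1.
Proof. apply A_uniq. have := phi_gt1; have := phi_lt2. simpl. lra. Qed.

Fixpoint fib (n : nat) : nat :=
  match n with
  | 0 => 0
  | 1 => 1
  | S ((S m) as p) => fib p + fib m
  end.

Lemma fibSS n : fib n.+2 = fib n.+1 + fib n.
Proof. by []. Qed.

Lemma fibE n m k : n = k.+2 -> m = k.+1 -> fib n = fib m + fib k.
Proof. by move=> -> ->. Qed.

Lemma fib_pos n : 0 < n -> 0 < fib n.
Proof.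
elim/ltn_ind: n => [[|[|n]]] IH // _.
rewrite fibSS. have := IH n.+1 (ltnSn _) isT. lia.
Qed.

Lemma cas j : fib (2*j+1) * fib (2*j+1) = fib (2*j+1) * fib (2*j) + fib (2*j) * fib (2*j) + 1
  /\ fib (2*j+2) * fib (2*j+2) + 1 = fib (2*j+2) * fib (2*j+1) + fib (2*j+1) * fib (2*j+1).
Proof.
elim: j => [|j [IH1 IH2]]; first by [].
have e2 : fib (2*j+2) = fib (2*j+1) + fib (2*j) by by apply fibE; lia.
have e3 : fib (2*j.+1+1) = fib (2*j+2) + fib (2*j+1) by by apply fibE; lia.
have e4 : fib (2*j.+1+2) = fib (2*j.+1+1) + fib (2*j+2) by by apply fibE; lia.
have e5 : 2*j.+1 = 2*j+2 by lia.
rewrite e5 in e4 e3 *. rewrite e4 e3.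
split; nia.
Qed.

Local Open Scope R_scope.

Lemma quad_lt_nat (x k : nat) : (x*x < x*k + k*k)%nat -> INR x < INR k * phi.
Proof.
move=> h. apply quad_lt; try apply pos_INR.
rewrite -!mult_INR -plus_INR. apply lt_INR. by apply/ltP.
Qed.

Lemma quad_gt_nat (x k : nat) : (x*k + k*k < x*x)%nat -> INR x > INR k * phi.
Proof.
move=> h. apply quad_gt; try apply pos_INR.
rewrite -!mult_INR -plus_INR. apply lt_INR. by apply/ltP.
Qed.

Local Close Scope R_scope.

Lemma Fb1 j : A (fib (2*j+2)) = fib (2*j+3) - 1.
Proof.
have [c _] := cas j.+1.
have e1 : 2*j.+1 = 2*j+2 by lia. have e2 : 2*j.+1+1 = 2*j+3 by lia.
rewrite e2 e1 in c.
set a := fib (2*j+2) in c *. set b := fib (2*j+3) in c *.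
have hb : b = a + fib (2*j+1) by rewrite /a /b; by apply fibE; lia.
have h1 : 0 < fib (2*j+1) by apply fib_pos; lia.
have ha : 0 < a by apply fib_pos; lia.
apply A_uniq.
have u : (b*a + a*a < b*b)%nat by lia.
have l : ((b-1)*(b-1) < (b-1)*a + a*a)%nat.
  have [d hd] : exists d, b = d.+1 by exists (b-1); lia.
  rewrite hd subn1 /= in c *. nia.
have U := quad_gt_nat _ _ u. have L := quad_lt_nat _ _ l.
have -> : (INR (b - 1) + 1 = INR b)%R by rewrite -S_INR; congr INR; lia.
split; [apply Rlt_le|]; lra.
Qed.

Lemma Fb2 j : A (fib (2*j+1)) = fib (2*j+2).
Proof.
have [_ c] := cas j.
set a := fib (2*j+2) in c *. set k := fib (2*j+1) in c *.
have hb : a = k + fib (2*j) by rewrite /a /k; by apply fibE; lia.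
have hk : 0 < k by apply fib_pos; lia.
apply A_uniq.
have l : (a*a < a*k + k*k)%nat by lia.
have u : ((a+1)*k + k*k < (a+1)*(a+1))%nat by nia.
have U := quad_gt_nat _ _ u. have L := quad_lt_nat _ _ l.
rewrite plus_INR /= in U.
split; [apply Rlt_le|]; lra.
Qed.

Definition E2 (n : nat) : Prop := exists j, n = fib (2*j+3).

Lemma fib3 j : fib (2*j+3) = fib (2*j+2) + fib (2*j+1).
Proof. by apply fibE; lia. Qed.
Lemma fib4 j : fib (2*j+4) = fib (2*j+3) + fib (2*j+2).
Proof. by apply fibE; lia. Qed.
Lemma fib2 j : fib (2*j+2) = fib (2*j+1) + fib (2*j).
Proof. by apply fibE; lia. Qed.

Lemma E2_notA {n} : E2 n -> ~ InA n.
Proof.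
move=> [j ->]. rewrite fib3 -Fb2.
apply notA_B. apply fib_pos. lia.
Qed.

Lemma E1_A {n} : E2 n.+1 -> InA n.
Proof.
move=> [j e]. exists (fib (2*j+2)). split; first by apply fib_pos; lia.
rewrite Fb1. lia.
Qed.

Lemma E2_ge2 {n} : E2 n -> 2 <= n.
Proof.
move=> [j ->]. rewrite fib3 fib2.
have := fib_pos (2*j+1) ltac:(lia). have := fib_pos (2*j+2) ltac:(lia).
rewrite fib2. lia.
Qed.

Lemma E2_val {n j} : n = fib (2*j+3) -> A n = fib (2*j+4).
Proof.
move=> ->. have := Fb2 j.+1.
have -> : 2*j.+1+1 = 2*j+3 by lia. have -> : 2*j.+1+2 = 2*j+4 by lia. done.
Qed.

Lemma E1_val {n j} : n.+1 = fib (2*j+3) -> A n = n + fib (2*j+2) - 1.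
Proof.
move=> e. have hn : n = A (fib (2*j+2)) by rewrite Fb1; lia.
have hp : 0 < fib (2*j+2) by apply fib_pos; lia.
rewrite {1}hn AA // -hn. lia.
Qed.

Lemma E2m2_A {n} : E2 n.+2 -> 2 <= n -> InA n.
Proof.
move=> [j e] hn.
case: j e => [|i] e.
  simpl in e. lia.
have e1 : 2*i.+1+3 = 2*i+5 by lia. rewrite e1 in e.
have f5 : fib (2*i+5) = fib (2*i+4) + fib (2*i+3) by apply fibE; lia.
have hp : 0 < fib (2*i+2) by apply fib_pos; lia.
set m := fib (2*i+4) - 1.
have hm : m = A (fib (2*i+2)) + fib (2*i+2).
  rewrite /m Fb1 fib4. have := fib_pos (2*i+3) ltac:(lia). lia.
have hm0 : 0 < m by rewrite hm; lia.
have g := gapN hm0 ltac:(rewrite hm; exact: notA_B hp).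
have hf4 : 0 < fib (2*i+4) by apply fib_pos; lia.
have em : m.+1 = fib (2*i.+1+2).
  rewrite /m. have -> : 2*i.+1+2 = 2*i+4 by lia. lia.
rewrite em Fb1 in g.
have e3 : 2*i.+1+3 = 2*i+5 by lia. rewrite e3 in g.
exists m. split=> //. lia.
Qed.

Local Open Scope R_scope.
Lemma phi_bounds : 1.6 < phi < 1.62.
Proof.
unfold phi.
have h1 : 2.2 < sqrt 5.
  have e : sqrt (2.2*2.2) = 2.2 by apply sqrt_square; lra.
  rewrite -e. apply sqrt_lt_1; lra.
have h2 : sqrt 5 < 2.24.
  have e : sqrt (2.24*2.24) = 2.24 by apply sqrt_square; lra.
  rewrite -e. apply sqrt_lt_1; lra.
lra.
Qed.
Local Close Scope R_scope.

Lemma A2 : A 2 = 3.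
Proof. apply A_uniq. have := phi_bounds. simpl. lra. Qed.
Lemma A3 : A 3 = 4.
Proof. apply A_uniq. have := phi_bounds. simpl. lra. Qed.

Lemma A_geS {N} : 2 <= N -> N < A N.
Proof.
move=> hN. have h := A_le hN. rewrite A2 in h.
have : forall d, 2 + d < A (2 + d).
  elim=> [|d IH]; first by rewrite A2.
  have := A_incr (2 + d). rewrite addnS. lia.
move/(_ (N - 2)). have -> : 2 + (N - 2) = N by lia. done.
Qed.

Lemma B_inj {k l} : A k + k = A l + l -> k = l.
Proof.
move=> e. case: (ltngtP k l) => // h.
  have := A_mono h. lia.
have := A_mono h. lia.
Qed.

Lemma AmN_ge2 {N} : 4 <= N -> 2 <= A N - N.
Proof.
move=> hN. case: (@bracket N ltac:(lia)) => i /andP [h1 h2].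
have e := CNT h1 h2.
have : 2 <= i.
  case: i h1 h2 e => [|[|i]] h1 h2 e //.
  - rewrite A1 in h2. lia.
  - rewrite A2 in h2. lia.
lia.
Qed.

Lemma AmN_mono {m n} : m <= n -> A m - m <= A n - n.
Proof.
move=> h. have [d ->] : exists d, n = m + d by exists (n - m); lia.
elim: d => [|d IH]; first by rewrite addn0.
have := A_incr (m + d). have := A_ge (m + d). have := A_ge (m + d.+1). rewrite addnS. lia.
Qed.

Definition inA (n : nat) : bool := if excluded_middle_informative (InA n) then true else false.
Definition e2 (n : nat) : bool := if excluded_middle_informative (E2 n) then true else false.

Lemma inAP n : reflect (InA n) (inA n).
Proof. rewrite /inA. case: excluded_middle_informative => h; by constructor. Qed.
Lemma e2P n : reflect (E2 n) (e2 n).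
Proof. rewrite /e2. case: excluded_middle_informative => h; by constructor. Qed.

Definition q (n : nat) : nat := A n - n - e2 n.
Definition LL (n : nat) : bool := (inA n && ~~ e2 n.+1) || e2 n.
Definition Z (n : nat) : nat := if n <= 1 then n else q n + (if LL n then n.+1 else 0).

Lemma E2_2 : E2 2. Proof. by exists 0. Qed.
Lemma InA3 : InA 3. Proof. exists 2; split=> //; exact: A2. Qed.
Lemma InA4 : InA 4. Proof. exists 3; split=> //; exact: A3. Qed.

Lemma q_rec {N} : 2 <= N -> q N.+1 = q N + LL N.
Proof.
move=> hN. rewrite /q /LL. have hA := A_geS hN.
case: (@gap_cases N ltac:(lia)) => [[hi g]|[hi g]].
- have : e2 N = false by apply/e2P => /E2_notA.
  have : inA N = true by apply/inAP.
  move=> -> ->. rewrite g. case: (e2 N.+1); simpl; lia.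
- have : e2 N.+1 = false by apply/e2P => /E1_A.
  have : inA N = false by apply/inAP.
  move=> -> ->. rewrite g. case: (e2P N) => h /=.
  + lia.
  + lia.
Qed.

Lemma Z_T1 {N} : 2 <= N -> InA N -> ~ E2 N.+1 -> Z N = A N + 1.
Proof.
move=> hN hi he. rewrite /Z /q /LL.
have -> : (N <= 1) = false by lia.
have : e2 N = false by apply/e2P => /E2_notA.
have : e2 N.+1 = false by apply/e2P.
have : inA N = true by apply/inAP.
move=> -> -> ->. have := A_geS hN. simpl. lia.
Qed.

Lemma Z_T2 {N} : E2 N -> Z N = A N.
Proof.
move=> he. have hN := E2_ge2 he. rewrite /Z /q /LL.
have -> : (N <= 1) = false by lia.
have : e2 N = true by apply/e2P.
move=> ->. rewrite orbT. have := A_geS hN. simpl. lia.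
Qed.

Lemma Z_S1 {N} : 2 <= N -> ~ InA N -> ~ E2 N -> Z N = A N - N.
Proof.
move=> hN hi he. rewrite /Z /q /LL.
have -> : (N <= 1) = false by lia.
have : e2 N = false by apply/e2P.
have : inA N = false by apply/inAP.
move=> -> ->. simpl. lia.
Qed.

Lemma Z_S2 {N} : 2 <= N -> E2 N.+1 -> Z N = A N - N.
Proof.
move=> hN he. rewrite /Z /q /LL.
have -> : (N <= 1) = false by lia.
have : e2 N = false by apply/e2P => /E2_notA; have := E1_A he.
have : e2 N.+1 = true by apply/e2P.
move=> -> ->. rewrite andbF. simpl. lia.
Qed.

Lemma Z_cases {N} : 2 <= N ->
  [/\ InA N, ~ E2 N.+1 & Z N = A N + 1] \/ (E2 N /\ Z N = A N) \/
  [/\ ~ InA N, ~ E2 N & Z N = A N - N] \/ (E2 N.+1 /\ Z N = A N - N).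
Proof.
move=> hN.
case: (e2P N) => h2; first by right; left; split=> //; exact: Z_T2.
case: (e2P N.+1) => h3; first by right; right; right; split=> //; exact: Z_S2.
case: (inAP N) => h1.
  by left; split=> //; exact: Z_T1.
by right; right; left; split=> //; exact: Z_S1.
Qed.

Lemma Z_ge2 {N} : 2 <= N -> 2 <= Z N.
Proof.
move=> hN. have hA := A_geS hN.
case: (Z_cases hN) => [[_ _ ->]|[[_ ->]|[[h1 h2 ->]|[h3 ->]]]]; try lia.
- apply AmN_ge2. case: N hN h1 h2 hA => [|[|[|[|N]]]] //= _ h1 h2 _.
  + by case: h2; exact: E2_2.
  + by case: h1; exact: InA3.
- apply AmN_ge2. case: N hN h3 hA => [|[|[|[|N]]]] //= _ h3 _.
  + by have := E2_notA h3; case; exact: InA3.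
  + by have := E2_notA h3; case; exact: InA4.
Qed.

Definition Ltype N := (InA N /\ ~ E2 N.+1) \/ E2 N.
Definition Stype N := (~ InA N /\ ~ E2 N) \/ E2 N.+1.

Lemma LorS N : Ltype N \/ Stype N.
Proof.
rewrite /Ltype /Stype.
case: (e2P N) => h2; first by left; right.
case: (e2P N.+1) => h3; first by right; right.
case: (inAP N) => h1; [left; left|right; left]; by split.
Qed.

Lemma ZL {N} : 2 <= N -> Ltype N -> Z N = A N + 1 - e2 N.
Proof.
move=> hN [[h1 h2]|h].
- rewrite (Z_T1 hN h1 h2). have : e2 N = false by apply/e2P => /E2_notA. move=> ->. lia.
- rewrite (Z_T2 h). have : e2 N = true by apply/e2P. move=> ->. lia.
Qed.

Lemma ZS {N} : 2 <= N -> Stype N -> Z N = A N - N.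
Proof. move=> hN [[h1 h2]|h]; [exact: Z_S1|exact: Z_S2]. Qed.

Lemma E1_B i : fib (2*i+4) - 1 = A (fib (2*i+2)) + fib (2*i+2).
Proof. rewrite Fb1 fib4. have := fib_pos (2*i+3) ltac:(lia). lia. Qed.

Lemma S2_val {y} : 2 <= y -> E2 y.+1 -> exists i, A y - y = A (fib (2*i+2)) + fib (2*i+2).
Proof.
move=> hy [[|i] e].
  simpl in e. lia.
exists i. rewrite (E1_val e) -E1_B.
have -> : 2*i.+1+2 = 2*i+4 by lia. lia.
Qed.

Lemma LS_ne {x y} : 2 <= x -> 2 <= y -> Ltype x -> Stype y -> Z x <> Z y.
Proof.
move=> hx hy Lx Sy. rewrite (ZS hy Sy).
case: Lx => [[h1 h2]|h].
- rewrite (Z_T1 hx h1 h2).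
  case: h1 => k [hk ex]. subst x.
  rewrite AA //.
  case: Sy => [[n1 n2]|s2].
  + case: (B_of_notA (ltnW hy) n1) => l [hl ey].
    rewrite {1}ey AB // ey. move=> e.
    apply: (notA_B hk). exists l; split=> //. lia.
  + case: (S2_val hy s2) => i ->. move=> e.
    have ek : k = fib (2*i+2) by apply B_inj; lia.
    apply h2. exists i. rewrite ek Fb1. have := fib_pos (2*i+3) ltac:(lia). lia.
- rewrite (Z_T2 h).
  case: Sy => [[n1 n2]|s2].
  + case: (B_of_notA (ltnW hy) n1) => l [hl ey].
    rewrite {1}ey AB // ey. move=> e.
    have el : l = x by apply A_inj; lia.
    apply n2. case: h => j ej. exists j.+1. rewrite ey el.
    rewrite (E2_val ej) ej. have -> : 2*j.+1+3 = 2*j+5 by lia.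
    symmetry. by apply fibE; lia.
  + case: (S2_val hy s2) => i ->. move=> e.
    apply: (@notA_B (fib (2*i+2))); first by apply fib_pos; lia.
    exists x. split; [lia|done].
Qed.

Lemma LL_lt {a b} : 2 <= a -> a < b -> Ltype a -> Ltype b -> Z a < Z b.
Proof.
move=> ha hab La Lb. have hb : 2 <= b by lia.
rewrite (ZL ha La) (ZL hb Lb).
have hle : A a.+1 <= A b by apply A_le.
case: La => [[h1 h2]|h].
- have : e2 a = false by apply/e2P => /E2_notA.
  move=> ->. case: (@gap_cases a ltac:(lia)) => [[_ g]|[h3 _]]; last by [].
  have := A_incr a. case: (e2 b); lia.
- have : e2 a = true by apply/e2P. move=> ->.
  have := A_incr a. case: (e2 b); lia.
Qed.

Lemma SS_lt {a b} : 2 <= a -> a < b -> Stype a -> Stype b -> Z a < Z b.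
Proof.
move=> ha hab Sa Sb. have hb : 2 <= b by lia.
rewrite (ZS ha Sa) (ZS hb Sb).
case: Sa => [[h1 h2]|h].
- have g := gapN (ltnW ha) h1.
  have ia := B_succA (ltnW ha) h1.
  case: (ltngtP b a.+1) => hb2; first lia.
  + have := @AmN_mono a.+2 b hb2.
    case: (@gap_cases a.+1 isT) => [[_ g2]|[h3 _]]; last by [].
    have := A_ge a. lia.
  + subst b. exfalso. case: Sb => [[n1 _]|s2]; first by [].
    by apply h1; apply E2m2_A.
- have ia := E1_A h.
  case: (@gap_cases a ltac:(lia)) => [[_ g]|[h3 _]]; last by [].
  have := @AmN_mono a.+1 b hab. have := A_ge a. lia.
Qed.

Lemma Z_inj {a b} : Z a = Z b -> a = b.
Proof.
wlog hab : a b / a <= b.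
  move=> W e. case: (leqP a b) => h; first exact: W.
  symmetry. apply W; [lia|done].
move=> e. case: (ltngtP a b) => // h; last by lia.
exfalso.
have Z01 : forall n, n <= 1 -> Z n = n by case=> [|[|n]].
case: (leqP a 1) => ha.
  case: (leqP b 1) => hb1.
    rewrite !Z01 in e; lia.
  have := Z_ge2 hb1. rewrite -e Z01 //. lia.
have hb : 2 <= b by lia.
case: (LorS a) => Ta; case: (LorS b) => Tb.
- have := LL_lt ha h Ta Tb. lia.
- exact: LS_ne ha hb Ta Tb e.
- exact: LS_ne hb ha Tb Ta (esym e).
- have := SS_lt ha h Ta Tb. lia.
Qed.

Lemma LLP n : LL n = true <-> Ltype n.
Proof.
rewrite /LL /Ltype. split.
- case/orP => [/andP [/inAP h1 h2]|/e2P h]; last by right.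
  left; split=> //. by move/e2P; apply/negP.
- move=> [[h1 h2]|h]; apply/orP; [left|right; exact/e2P].
  apply/andP; split; [exact/inAP|]. by apply/negP => /e2P.
Qed.

Lemma Z_small N : 2 <= N -> LL N = false -> Z N = q N.
Proof. move=> hN hL. rewrite /Z hL. have -> : (N <= 1) = false by lia. lia. Qed.

Lemma Z_wit {N} : 2 <= N -> LL N -> exists m, m < N /\ Z m = q N.
Proof.
move=> hN hLN.
case: N hN hLN => [|[|[|[|M]]]] //= hN hLN.
- exists 0. split=> //. rewrite /q A2.
  have : e2 2 = true by apply/e2P; exact: E2_2. by move=> ->.
- exists 1. split=> //. rewrite /q A3.
  have : e2 3 = false by apply/e2P => /E2_notA; apply; exact: InA3. by move=> ->.
- set N := M.+4 in hLN *. set P := M.+3.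
  have hP : 2 <= P by rewrite /P.
  case hLP : (LL P).
  2: { exists P. split; first by rewrite /N /P.
       rewrite Z_small // (q_rec hP) hLP. lia. }
  move/LLP: hLP => LP. move/LLP: hLN => LN.
  have [hiN hnN] : InA N /\ ~ E2 N.+1.
    case: LN => [//|eN]. exfalso.
    have iP := E1_A eN.
    case: LP => [[_ h]|eP]; first by apply h.
    exact: E2_notA eP iP.
  have qN : q N = A N - N.
    rewrite /q. have : e2 N = false by apply/e2P => /E2_notA. move=> ->. lia.
  rewrite qN.
  case: LP => [[hiP hnP]|eP].
  + case: hiP => i [hi ei]. case: hiN => i' [hi' ei'].
    have hii : i < i' by rewrite -A_monoE ei ei' /N /P.
    have hAi : A i.+1 = (A i).+1.
      have := A_le hii. have := A_incr i. rewrite ei ei' /N /P. lia.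
    have niA : ~ InA i.
      move=> hA. case: (gap_cases hi) => [[_ g]|[h _]]; [lia|done].
    case: (B_of_notA hi niA) => k [hk ek].
    have hc1 : A i < N by rewrite ei /N /P.
    have hc2 : N <= A i.+1 by rewrite hAi ei /N /P.
    have eAN := CNT hc1 hc2.
    have hnE : ~ E2 (A k).+1.
      move=> [j ej].
      have ek2 : k = fib (2*j+2) by apply A_inj; rewrite Fb1; lia.
      apply hnN. exists j.+1.
      have ei1 : i.+1 = fib (2*j.+1+2).
        rewrite ek ek2 -E1_B. have -> : 2*j.+1+2 = 2*j+4 by lia.
        have := fib_pos (2*j+4) ltac:(lia). lia.
      have : N = A i.+1 by rewrite hAi ei.
      move=> ->. rewrite ei1 Fb1.
      have -> : 2*j.+1+3 = 2*j+5 by lia.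
      have := fib_pos (2*j+5) ltac:(lia). lia.
    have hAk : 2 <= A k.
      have := A_pos hk. case hA1 : (A k) => [|[|n]] //; try lia.
      exfalso. apply hnE. rewrite hA1. exact: E2_2.
    exists (A k). split.
    * have := A_ge i. rewrite ei /N /P. lia.
    * rewrite (Z_T1 hAk) //; last by exists k.
      rewrite AA //. lia.
  + case: eP => [[|j] ej].
      rewrite /P in ej. simpl in ej. lia.
    have niP : ~ InA P by apply E2_notA; exists j.+1.
    have gP := gapN (ltnW hP) niP.
    have eAP := E2_val ej.
    have e3 : fib (2*j+3) < P.
      rewrite ej. have -> : 2*j.+1+3 = (2*j+3).+2 by lia. rewrite fibSS.
      have := fib_pos (2*j+3).+1 isT. lia.
    exists (fib (2*j+3)). split; first by rewrite /N; lia.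
    rewrite (Z_T2 (ex_intro _ j erefl)) (E2_val erefl).
    have -> : N = P.+1 by [].
    rewrite gP eAP ej.
    have -> : 2*j.+1+4 = (2*j+4).+2 by lia. have -> : 2*j.+1+3 = (2*j+4).+1 by lia.
    rewrite fibSS. lia.
Qed.

Definition qf (n : nat) : nat := if n <= 1 then 0 else A n.-1 - n.-1 + 1.
Definition Lf (n : nat) : bool := (n == 1) || inA n.-1.
Definition F (n : nat) : nat := if n == 0 then 0 else qf n + (if Lf n then n else 0).

Lemma qf_rec {N} : 1 <= N -> qf N.+1 = qf N + Lf N.
Proof.
move=> hN. rewrite /qf /Lf. case: N hN => [//|[|N]] _ /=.
  by rewrite A1.
case: (@gap_cases N.+1 isT) => [[hi g]|[hi g]].
- have : inA N.+1 = true by apply/inAP. move=> ->. rewrite g. have := A_ge N.+1. lia.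
- have : inA N.+1 = false by apply/inAP. move=> ->. rewrite g. have := A_ge N.+1. lia.
Qed.

Lemma FA N k : 0 < k -> N = (A k).+1 -> F N = A k + k + 1.
Proof.
move=> hk ->. rewrite /F /qf /Lf /=.
have hA := A_pos hk.
have -> : (A k < 1) = false by lia.
have : inA (A k) = true by apply/inAP; exists k.
move=> ->. rewrite orbT AA //. lia.
Qed.

Lemma FB N l : 0 < l -> N = (A l + l).+1 -> F N = A l + 1.
Proof.
move=> hl ->. rewrite /F /qf /Lf /=.
have hA := A_pos hl.
have -> : (A l + l < 1) = false by lia.
have : inA (A l + l) = false by apply/inAP; apply notA_B.
move=> ->. have -> : (A l + l).+1 == 1 = false by lia.
rewrite AB // /=. lia.
Qed.

Lemma F_shape {N} : 2 <= N ->
  (exists k, [/\ 0 < k, N = (A k).+1 & F N = A k + k + 1]) \/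
  (exists l, [/\ 0 < l, N = (A l + l).+1 & F N = A l + 1]).
Proof.
move=> hN. case: (inAP N.-1) => h.
- case: h => k [hk ek]. left; exists k; split=> //; first lia.
  apply FA => //; lia.
- case: (@B_of_notA N.-1 ltac:(lia) h) => l [hl el].
  right; exists l; split=> //; first lia. apply FB => //; lia.
Qed.

Lemma FF N : F (F N) = N.
Proof.
case: N => [//|[//|N]].
case: (@F_shape N.+2 isT) => [[k [hk ek ->]]|[l [hl el ->]]].
- rewrite (@FB _ k) //; lia.
- rewrite (@FA _ l) //; lia.
Qed.

Lemma F_inj {a b} : F a = F b -> a = b.
Proof. move=> e. by rewrite -(FF a) e FF. Qed.

Lemma qf_lt {N} : 1 <= N -> qf N < N.
Proof.
move=> hN. rewrite /qf. case: N hN => [//|[//|N]] _ /=.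
have := @A_lt2 N.+1 isT. lia.
Qed.

Lemma F_wit {N} : 1 <= N -> Lf N -> exists m, m < N /\ F m = qf N.
Proof.
move=> hN. rewrite /Lf. case: N hN => [//|[|N]] _ /=.
  by move=> _; exists 0.
move/inAP => [k [hk ek]].
have qN : qf N.+2 = k by rewrite /qf /= -ek AA //; lia.
rewrite qN. exists (F k). split; last exact: FF.
have hAk := A_ge k.
case: k hk ek qN hAk => [//|[|k]] _ ek qN hAk.
  rewrite /F /qf /Lf /=. lia.
case: (@F_shape k.+2 isT) => [[j [hj ej ->]]|[l [hl el ->]]].
- have g := gapA hj. move: (AA hj) => e. rewrite ej g in ek. lia.
- have := A_ge l. lia.
Qed.

Lemma least_belowP (P : pred nat) b v : v < b -> P v -> (forall m, m < v -> ~~ P m) ->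
  least_below b P = v.
Proof.
move=> hvb hP hm. rewrite /least_below.
have -> : b = v + (b - v) by lia.
rewrite iotaD find_cat.
have -> : has P (iota 0 v) = false.
  apply/negbTE/hasPn => x. rewrite mem_iota => /andP [_ hx]. apply hm. lia.
rewrite size_iota add0n.
have -> : b - v = (b - v).-1.+1 by lia.
by rewrite /= hP addn0.
Qed.

Lemma modlem N q m t : q < N.+1 -> m < q + N.+1 -> N * q + m = N.+1 * t -> m = q.
Proof.
move=> h1 h2 e.
case: (ltngtP t q) => h.
- have : N.+1 * t <= N.+1 * q - N.+1 by nia. nia.
- have : N.+1 * q + N.+1 <= N.+1 * t by nia. nia.
- subst t. nia.
Qed.

Lemma iotaS n : iota 0 n.+1 = rcons (iota 0 n) n.
Proof. by rewrite -addn1 iotaD cats1. Qed.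

Lemma sumZ N : 2 <= N -> sumn (drop 2 (map Z (iota 0 N))) = N * q N.
Proof.
elim: N => [//|N IH] hN.
case: (ltngtP N 1) => h.
- lia.
- rewrite iotaS map_rcons drop_rcons; last by rewrite size_map size_iota.
  rewrite sumn_rcons IH // (q_rec (h : 2 <= N)) /Z.
  have -> : (N <= 1) = false by lia.
  case: (LL N) => /=; lia.
- subst N. rewrite /= /q A2.
  have : e2 2 = true by apply/e2P; exact: E2_2. by move=> ->.
Qed.

Lemma sumF N : 1 <= N -> sumn (behead (map F (iota 0 N))) = N.-1 * qf N.
Proof.
elim: N => [//|N IH] hN.
case: (ltngtP N 0) => h.
- lia.
- have -> : behead (map F (iota 0 N.+1)) = rcons (behead (map F (iota 0 N))) (F N).
    rewrite iotaS map_rcons. move: h; clear IH hN; case: N => [//|N] _ /=. done.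
  rewrite sumn_rcons IH // (qf_rec h) /F.
  have -> : (N == 0) = false by lia.
  move: h; clear IH hN; case: N => [//|M] _ /=. case: (Lf M.+1) => /=; nia.
- by subst N.
Qed.

Lemma memZ N m : (m \in map Z (iota 0 N)) = [exists i : 'I_N, Z i == m].
Proof.
apply/mapP/existsP.
- move=> [i]. rewrite mem_iota => /andP [_ hi] ->. by exists (Ordinal hi).
- move=> [i /eqP <-]. exists (nat_of_ord i) => //. by rewrite mem_iota ltn_ord.
Qed.

Lemma memF N m : (m \in map F (iota 0 N)) = [exists i : 'I_N, F i == m].
Proof.
apply/mapP/existsP.
- move=> [i]. rewrite mem_iota => /andP [_ hi] ->. by exists (Ordinal hi).
- move=> [i /eqP <-]. exists (nat_of_ord i) => //. by rewrite mem_iota ltn_ord.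
Qed.

Lemma q_le {N} : 2 <= N -> q N <= N.
Proof. move=> hN. rewrite /q. have := @A_lt2 N ltac:(lia). lia. Qed.

Lemma next_z_eq N : 1 <= N -> next_z N (map Z (iota 0 N)) = Z N.
Proof.
move=> hN. rewrite /next_z.
case: (ltngtP N 1) => h; first lia; last first.
  subst N. apply least_belowP => //. move=> [|//] _. done.
have hN2 : 2 <= N by [].
rewrite sumZ //.
have hq := q_le hN2.
have eZ : Z N = q N + (if LL N then N.+1 else 0).
  rewrite /Z. have -> : (N <= 1) = false by lia. done.
apply least_belowP.
- rewrite eZ. case: (LL N); nia.
- apply/andP; split.
  + rewrite memZ. apply/negP => /existsP [i /eqP e].
    have := Z_inj e. have := ltn_ord i. lia.
  + rewrite eZ. apply/dvdnP. exists (q N + LL N). case: (LL N) => /=; nia.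
- move=> m hm. apply/negP => /andP [hnm /dvdnP [t ht]].
  have em : m = q N.
    apply (@modlem N (q N) m t); [lia| |lia].
    move: hm. rewrite eZ. case: (LL N); lia.
  case hL : (LL N).
  + case: (Z_wit hN2 hL) => i [hi ei].
    move: hnm. rewrite memZ. move/negP; apply. apply/existsP.
    exists (Ordinal hi). by rewrite /= ei em.
  + move: hm. rewrite eZ hL. lia.
Qed.

Lemma zseq_eq n : zseq n = map Z (iota 0 n.+1).
Proof.
elim: n => [//|n IH].
rewrite /= -/zseq IH next_z_eq // -map_rcons -iotaS. done.
Qed.

Lemma z_eq n : z n = Z n.
Proof.
rewrite /z zseq_eq (nth_map 0); last by rewrite size_iota.
by rewrite nth_iota.
Qed.

Lemma next_f_eq N : 1 <= N -> next_f N (map F (iota 0 N)) = F N.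
Proof.
move=> hN. rewrite /next_f sumF //.
have hq := qf_lt hN.
have eF : F N = qf N + (if Lf N then N else 0).
  rewrite /F. have -> : (N == 0) = false by lia. done.
have hN1 : N = N.-1.+1 by lia.
apply least_belowP.
- rewrite eF. case: (Lf N); nia.
- apply/andP; split.
  + rewrite memF. apply/negP => /existsP [i /eqP e].
    have := F_inj e. have := ltn_ord i. lia.
  + rewrite eF. apply/dvdnP. exists (qf N + Lf N). case: (Lf N) => /=; nia.
- move=> m hm. apply/negP => /andP [hnm /dvdnP [t ht]].
  have em : m = qf N.
    apply (@modlem N.-1 (qf N) m t); [lia| |].
    + move: hm. rewrite eF. case: (Lf N); lia.
    + rewrite -hN1. lia.
  case hL : (Lf N).
  + case: (F_wit hN hL) => i [hi ei].
    move: hnm. rewrite memF. move/negP; apply. apply/existsP.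
    exists (Ordinal hi). by rewrite /= ei em.
  + move: hm. rewrite eF hL. lia.
Qed.

Lemma fseq_eq n : fseq n = map F (iota 0 n.+1).
Proof.
elim: n => [//|n IH].
rewrite /= -/fseq IH next_f_eq // -map_rcons -iotaS. done.
Qed.

Lemma f_eq n : Defs.f n = F n.
Proof.
rewrite /Defs.f fseq_eq (nth_map 0); last by rewrite size_iota.
by rewrite nth_iota.
Qed.

Lemma Z_le {N} : 2 <= N -> Z N <= A N + 1.
Proof.
move=> hN. case: (Z_cases hN) => [[_ _ ->]|[[_ ->]|[[_ _ ->]|[_ ->]]]]; lia.
Qed.

Lemma key n : Z n = F n + n <-> n = 0 \/ exists k, 0 < k /\ n = A k + k + 1.
Proof.
case: n => [|[|n]].
- split=> _; [by left|done].
- split; first done. move=> [//|[k [hk e]]]. have := A_pos hk. lia.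
- set N := n.+2. have hN : 2 <= N by [].
  case: (F_shape hN) => [[k [hk ek eF]]|[l [hl el eF]]].
  + split.
    * move=> e. exfalso. have := Z_le hN. rewrite e eF.
      have : A N = A k + k + 1 by rewrite ek AS1.
      have := A_pos hk. lia.
    * move=> [//|[l [hl el]]]. exfalso.
      apply (notA_B hl). exists k. split=> //. lia.
  + split.
      move=> _. right. exists l. split=> //. lia.
    move=> _.
    have hiN : InA N by exists (A l).+1; split=> //; rewrite AS1 //; lia.
    have hnE : ~ E2 N.+1.
      move=> hE. apply (notA_B hl). apply E2m2_A.
        have -> : (A l + l).+2 = N.+1 by lia. done.
      have := A_pos hl. lia.
    rewrite (Z_T1 hN hiN hnE) eF.
    have hB : 0 < A l + l by have := A_pos hl; lia.
    have g := gapN hB (notA_B hl).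
    have -> : N = (A l + l).+1 by lia.
    rewrite g AB //. lia.
Qed.

Local Open Scope R_scope.
Lemma floor_phi2 k : Int_part (INR k * phi ^ 2) = Z.of_nat (A k + k).
Proof.
apply Int_part_uniq. rewrite plus_INR.
have e : INR k * phi ^ 2 = INR k * phi + INR k.
  replace (phi ^ 2) with (phi * phi) by ring. rewrite phi_sq. ring.
rewrite e. have := A_spec k. lra.
Qed.
Local Close Scope R_scope.

Theorem mainTheorem9 (n : nat) :
  Defs.z n = Defs.f n + n <->
  (n = 0 \/
   exists k : nat, (1 <= k)%nat /\
     Z.of_nat n = (Int_part (INR k * Defs.phi ^ 2) + 1)%Z).
Proof.
rewrite z_eq f_eq key. split.
- move=> [->|[k [hk ->]]]; [by left|right]. exists k. split=> //.
  rewrite floor_phi2. lia.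
- move=> [->|[k [hk e]]]; [by left|right]. exists k. split=> //.
  rewrite floor_phi2 in e. lia.
Qed.
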